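(* Let $d\ge2$, $U_0$ a non-empty bounded Borel subset of $\mathbb{R}^d$, $U_1=\mathbb{R}^d\setminus U_0$. For $x\in\mathbb{R}^d$ and integers $\ell'>\ell$ set $\beta'=\frac{1}{|B(x,2^{-\ell})|}\int_{B(x,2^{-\ell})}\widehat\sigma_{\ell'}(y)\,dy$. Then for every $0\le\delta\le\beta'\wedge(1-\beta')$ at least one of the following holds: (i) $\mu_{x,\ell}(\{\widehat\sigma_{\ell'}>\beta'+\delta\})\ge\frac\delta2$ and $\mu_{x,\ell}(\{\widehat\sigma_{\ell'}<\beta'-\delta\})\ge\frac\delta2$; (ii) $\mu_{x,\ell}(\{\beta'-\delta\le\widehat\sigma_{\ell'}\le\beta'+\delta\})\ge\frac14-\frac\delta2$.
   Context: $B(x,r)$ is the closed sup-norm ball, $|\cdot|$ Lebesgue measure, $\widehat\sigma_\ell(x)=|B(x,2^{-\ell})\cap U_1|/|B(x,2^{-\ell})|$, and $\mu_{x,\ell}(dy)=|B(x,2^{-\ell})|^{-1}1_{B(x,2^{-\ell})}(y)\,dy$ is normalized Lebesgue measure on $B(x,2^{-\ell})$. *)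

(* Defs.v *)
From HB Require Import structures.
From mathcomp Require Import all_boot all_order all_algebra.
From mathcomp Require Import all_classical all_reals all_analysis.
Set Implicit Arguments. Unset Strict Implicit. Unset Printing Implicit Defensive.
Import Order.TTheory GRing.Theory Num.Theory.
Local Open Scope classical_set_scope.
Local Open Scope ring_scope.

(* R^d is modelled as d.-tuple R, with the library's product sigma-algebra
   (generated by the coordinate projections), i.e. the Borel sigma-algebra. *)

(* lam is (d-dimensional) Lebesgue measure: it gives every closed box its volume.
   This determines lam uniquely on the Borel sets. *)
Definition is_lebesgue_nd (R : realType) (d : nat)
  (lam : {measure set (d.-tuple R) -> \bar R}) : Prop :=
  forall a b : d.-tuple R, (forall i, tnth a i <= tnth b i) ->
    lam [set y | forall i, tnth a i <= tnth y i <= tnth b i] =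
    (\prod_(i < d) (tnth b i - tnth a i))%:E.

Definition supball (R : realType) (d : nat) (x : d.-tuple R) (r : R)
  : set (d.-tuple R) :=
  [set y | forall i, `|tnth y i - tnth x i| <= r].

Definition bounded_nd (R : realType) (d : nat) (A : set (d.-tuple R)) : Prop :=
  exists M : R, forall y, A y -> forall i, `|tnth y i| <= M.

Definition mu_ball (R : realType) (d : nat)
  (lam : {measure set (d.-tuple R) -> \bar R}) (x : d.-tuple R) (l : int)
  (A : set (d.-tuple R)) : R :=
  fine (lam (supball x (2%:R ^ (- l)) `&` A)) /
  fine (lam (supball x (2%:R ^ (- l)))).

Definition sigma_hat (R : realType) (d : nat)
  (lam : {measure set (d.-tuple R) -> \bar R}) (U1 : set (d.-tuple R))
  (l : int) (x : d.-tuple R) : R :=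
  mu_ball lam x l U1.

Definition beta' (R : realType) (d : nat)
  (lam : {measure set (d.-tuple R) -> \bar R}) (U1 : set (d.-tuple R))
  (x : d.-tuple R) (l l' : int) : R :=
  Rintegral lam (supball x (2%:R ^ (- l))) (sigma_hat lam U1 l') /
  fine (lam (supball x (2%:R ^ (- l)))).

(* Main.v *)
Require Import Defs.
From HB Require Import structures.
From mathcomp Require Import all_boot all_order all_algebra.
From mathcomp Require Import all_classical all_reals all_analysis.
From mathcomp Require Import measurable_realfun.
From mathcomp Require Import ring lra.
Import Order.TTheory GRing.Theory Num.Theory.
Local Open Scope classical_set_scope.
Local Open Scope ring_scope.
Set Implicit Arguments. Unset Strict Implicit.

Lemma ballrel_meas (R : realType) (d : nat) (r : R) :
  measurable [set p : d.-tuple R * d.-tuple R | forall i, `|tnth p.2 i - tnth p.1 i| <= r].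
Proof.
have -> : [set p : d.-tuple R * d.-tuple R | forall i, `|tnth p.2 i - tnth p.1 i| <= r]
  = \bigcap_(i in [set: 'I_d]) ((fun p : d.-tuple R * d.-tuple R => `|tnth p.2 i - tnth p.1 i|) @^-1` `]-oo, r]).
  apply/seteqP; split => p /=.
    by move=> H i _ /=; rewrite in_itv /= H.
  by move=> H i; have := H i I; rewrite /= in_itv.
apply: fin_bigcap_measurable; first exact: finite_finset.
move=> i _; rewrite -[X in measurable X]setTI.
apply: (_ : measurable_fun setT _) => //.
apply: measurableT_comp => //.
apply: measurable_funB.
  exact: measurableT_comp (measurable_tnth i) measurable_snd.
exact: measurableT_comp (measurable_tnth i) measurable_fst.
Qed.

Lemma supball_xsection (R : realType) (d : nat) (r : R) x :
  supball x r = xsection [set p : d.-tuple R * d.-tuple R | forall i, `|tnth p.2 i - tnth p.1 i| <= r] x.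
Proof. by apply/seteqP; split => y; rewrite /xsection /= inE. Qed.

Lemma supball_meas (R : realType) (d : nat) (r : R) (x : d.-tuple R) :
  measurable (supball x r).
Proof. rewrite supball_xsection; apply: measurable_xsection; exact: ballrel_meas. Qed.

Lemma supball_lam (R : realType) (d : nat) (lam : {measure set (d.-tuple R) -> \bar R})
  (x : d.-tuple R) (r : R) : is_lebesgue_nd lam -> 0 <= r ->
  lam (supball x r) = ((r *+ 2) ^+ d)%:E.
Proof.
move=> hl r0.
pose a := [tuple tnth x i - r | i < d].
pose b := [tuple tnth x i + r | i < d].
have -> : supball x r = [set y | forall i, tnth a i <= tnth y i <= tnth b i].
  apply/seteqP; split => y /= H i; have := H i; rewrite !tnth_mktuple.
    by rewrite -ler_distlC distrC.
  by rewrite -ler_distlC distrC.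
rewrite hl; last by move=> i; rewrite !tnth_mktuple lerD2l; lra.
congr (_%:E).
rewrite -[in RHS](card_ord d) -prodr_const.
apply: eq_bigr => i _; rewrite !tnth_mktuple; lra.
Qed.
Lemma ballmeas_fun (R : realType) (d : nat) (lam : {measure set (d.-tuple R) -> \bar R})
  (U1 : set (d.-tuple R)) (x : d.-tuple R) (r0 r : R) :
  is_lebesgue_nd lam -> measurable U1 -> 0 <= r0 -> 0 <= r ->
  measurable_fun (supball x r0) (fun y => lam (supball y r `&` U1)).
Proof.
move=> hl mU r00 r0'.
have mK := supball_meas (r0 + r) x.
have lamK := supball_lam x hl (addr_ge0 r00 r0').
pose E := [set p : d.-tuple R * d.-tuple R | forall i, `|tnth p.2 i - tnth p.1 i| <= r] `&` (setT `*` U1).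
have mE : measurable E by apply: measurableI; [exact: ballrel_meas|exact: measurableX].
have H := @measurable_prod_subset_xsection _ _ (d.-tuple R) _ R lam _ mK.
have /H {H} : exists M : R, forall X, measurable X -> (mrestr lam mK X < M%:E)%E.
  exists (((r0 + r) *+ 2) ^+ d + 1) => X mX.
  rewrite /mrestr; apply: (le_lt_trans (le_measure _ _ _ _)).
  - by rewrite inE; apply: measurableI mX mK.
  - by rewrite inE; exact: mK.
  - exact: subIsetr.
  have hK : (lam (supball x (r0 + r)) < (((r0 + r) *+ 2) ^+ d + 1)%:E)%E by rewrite lamK lte_fin ltrDl.
  exact: hK.
move=> /(_ E mE) [_ mf].
have mf' := measurable_funS measurableT (@subsetT _ (supball x r0)) mf.
apply: eq_measurable_fun mf' => y /[!inE] yB /=.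
rewrite /mrestr; congr (lam _).
apply/seteqP; split => z.
  by rewrite /xsection /= inE /E => -[[/= Hz [_ Uz]] _]; split.
move=> [Hz Uz]; split; first by rewrite /xsection /= inE /E.
move=> i; have := Hz i; have := yB i.
have -> : tnth z i - tnth x i = (tnth z i - tnth y i) + (tnth y i - tnth x i) by ring.
move=> h1 h2; apply: (le_trans (ler_normD _ _)); lra.
Qed.
Lemma alg (R : realFieldType) (a m c L b dl : R) :
  0 <= a -> 0 <= m -> 0 <= c -> L = a + m + c -> 0 < L ->
  0 <= dl -> dl <= b -> dl <= 1 - b ->
  b * L <= (b - dl) * a + (b + dl) * m + c ->
  (b - dl) * m + (b + dl) * c <= b * L ->
  (dl / 2 * L <= c /\ dl / 2 * L <= a) \/ (4^-1 - dl / 2) * L <= m.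
Proof.
move=> a0 m0 c0 hL L0 d0 db d1 h1 h2.
have [hm|hm] := leP ((4^-1 - dl / 2) * L) m; first by right.
left; split.
  rewrite leNgt; apply/negP => hc.
  have dpos : 0 < dl by nra.
  nra.
rewrite leNgt; apply/negP => ha.
have dpos : 0 < dl by nra.
nra.
Qed.
Lemma bounded01 (R : realType) T (A : set T) (g : T -> R) :
  (forall y, A y -> 0 <= g y <= 1) -> [bounded g x | x in A].
Proof.
move=> hg; rewrite /bounded_near; near=> M => t At /=.
have /andP[h0 h1] := hg t At.
rewrite ger0_norm//; apply: (le_trans h1).
by near: M; exact: nbhs_pinfty_ge.
Unshelve. all: end_near. Qed.

Lemma Rint_split3 (R : realType) d (T : measurableType d)
  (mu : {measure set T -> \bar R}) (A1 A2 A3 : set T) (g : T -> R) :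
  measurable A1 -> measurable A2 -> measurable A3 ->
  [disjoint A1 & A2] -> [disjoint (A1 `|` A2) & A3] ->
  mu.-integrable (A1 `|` A2 `|` A3) (EFin \o g) ->
  Rintegral mu (A1 `|` A2 `|` A3) g =
  Rintegral mu A1 g + Rintegral mu A2 g + Rintegral mu A3 g.
Proof.
move=> m1 m2 m3 d12 d3 ig.
rewrite Rintegral_setU//; last exact: measurableU.
rewrite Rintegral_setU//.
apply: integrableS ig => //. all: try (by apply: measurableU). all: try exact: subsetUl. all: try (by apply: measurableU => //; apply: measurableU).
Qed.

Lemma Rint_le_cst (R : realType) d (T : measurableType d)
  (mu : {measure set T -> \bar R}) (A : set T) (g : T -> R) (k : R) :
  measurable A -> (mu A < +oo)%E -> mu.-integrable A (EFin \o g) ->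
  (forall y, A y -> g y <= k) -> Rintegral mu A g <= k * fine (mu A).
Proof.
move=> mA Afin ig hk; rewrite -Rintegral_cst//.
apply: le_Rintegral => //.
apply: measurable_bounded_integrable => //.
exact: bounded_cst.
Qed.

Lemma Rint_ge_cst (R : realType) d (T : measurableType d)
  (mu : {measure set T -> \bar R}) (A : set T) (g : T -> R) (k : R) :
  measurable A -> (mu A < +oo)%E -> mu.-integrable A (EFin \o g) ->
  (forall y, A y -> k <= g y) -> k * fine (mu A) <= Rintegral mu A g.
Proof.
move=> mA Afin ig hk; rewrite -Rintegral_cst//.
apply: le_Rintegral => //.
apply: measurable_bounded_integrable => //.
exact: bounded_cst.
Qed.

Unset Implicit Arguments.

Theorem lemma1p2 (R : realType) (d : nat)
  (lam : {measure set (d.-tuple R) -> \bar R})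
  (U0 : set (d.-tuple R)) (x : d.-tuple R) (l l' : int) (delta : R) :
  (2 <= d)%N ->
  is_lebesgue_nd lam ->
  measurable U0 -> U0 !=set0 -> bounded_nd U0 ->
  l < l' ->
  let U1 := ~` U0 in
  let b := beta' lam U1 x l l' in
  let s := sigma_hat lam U1 l' in
  0 <= delta -> delta <= Num.min b (1 - b) ->
  (mu_ball lam x l [set y | s y > b + delta] >= delta / 2 /\
   mu_ball lam x l [set y | s y < b - delta] >= delta / 2)
  \/
  mu_ball lam x l [set y | b - delta <= s y <= b + delta] >= 4^-1 - delta / 2.
Proof.
move=> d2 hl mU0 _ _ _ U1 b s d0.
rewrite le_min => /andP[db d1b].
have mU1 : measurable U1 by exact: measurableC.
set r0 : R := 2%:R ^ (- l).
set r : R := 2%:R ^ (- l').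
have r0p : 0 < r0 by apply: exprz_gt0.
have rp : 0 < r by apply: exprz_gt0.
set B := supball x r0.
have mB : measurable B := supball_meas r0 x.
set L := fine (lam B).
have lamB : lam B = ((r0 *+ 2) ^+ d)%:E := supball_lam x hl (ltW r0p).
have LE : L = (r0 *+ 2) ^+ d by rewrite /L lamB.
have Lp : 0 < L by rewrite LE exprn_gt0// pmulrn_rgt0.
have Bfin : (lam B < +oo)%E by rewrite lamB ltry.
set cr := (r *+ 2) ^+ d.
have crp : 0 < cr by rewrite exprn_gt0// pmulrn_rgt0.
have sE : forall y, s y = fine (lam (supball y r `&` U1)) / cr.
  by move=> y; rewrite /s /sigma_hat /mu_ball (supball_lam y hl (ltW rp)).
have s01 : forall y, 0 <= s y <= 1.
  move=> y; rewrite sE; apply/andP; split.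
    by rewrite divr_ge0// ?fine_ge0// ltW.
  rewrite ler_pdivrMr// mul1r.
  have h1 : (lam (supball y r `&` U1) <= lam (supball y r))%E.
    apply: le_measure; rewrite ?inE//; [exact: measurableI (supball_meas r y) mU1|exact: supball_meas].
  rewrite (supball_lam y hl (ltW rp)) in h1 *.
  rewrite -[cr]/(fine (cr%:E)); apply: fine_le => //.
  by rewrite ge0_fin_numE ?measure_ge0// (le_lt_trans h1)// ltry.
have ms : measurable_fun B s.
  have mf : measurable_fun B (fun y => fine (lam (supball y r `&` U1)) * cr^-1).
    apply: measurable_funM; last exact: measurable_cst.
    apply: measurableT_comp => //.
    exact: ballmeas_fun hl mU1 (ltW r0p) (ltW rp).
  by apply: eq_measurable_fun mf => y _; rewrite sE.
have sint : lam.-integrable B (EFin \o s).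
  apply: measurable_bounded_integrable => //.
  by apply: bounded01 => y _; exact: s01.
have mpre : forall Y, measurable Y -> measurable (B `&` s @^-1` Y) := ms mB.
set Am := B `&` [set y | s y < b - delta].
set A0 := B `&` [set y | b - delta <= s y <= b + delta].
set Ap := B `&` [set y | b + delta < s y].
have mAm : measurable Am.
  have -> : Am = B `&` s @^-1` `]-oo, (b - delta)[.
    by apply/seteqP; split => y [By hy]; split => //=; move: hy; rewrite /= in_itv.
  exact: mpre.
have mA0 : measurable A0.
  have -> : A0 = B `&` s @^-1` `[(b - delta), (b + delta)].
    by apply/seteqP; split => y [By hy]; split => //=; move: hy; rewrite /= in_itv.
  exact: mpre.
have mAp : measurable Ap.
  have -> : Ap = B `&` s @^-1` `](b + delta), +oo[.
    by apply/seteqP; split => y [By hy]; split => //=; move: hy; rewrite /= in_itv /= andbT.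
  exact: mpre.
have hB : B = Am `|` A0 `|` Ap.
  apply/seteqP; split => y; last by case=> [[]|] [].
  move=> By; have [h1|h1] := ltP (s y) (b - delta); first by left; left.
  have [h2|h2] := leP (s y) (b + delta); first by left; right; split => //; apply/andP.
  by right.
have d12 : [disjoint Am & A0].
  apply/disj_setPS => y [[_ /= h1] [_ /andP[h2 _]]]; lra.
have d3 : [disjoint Am `|` A0 & Ap].
  apply/disj_setPS => y [[[_ /= h1]|[_ /andP[_ h2]]] [_ /= h3]]; lra.
have fin A : A `<=` B -> measurable A -> (lam A < +oo)%E.
  by move=> AB mA; apply: le_lt_trans Bfin; apply: le_measure; rewrite ?inE.
have sintA A : A `<=` B -> measurable A -> lam.-integrable A (EFin \o s).
  by move=> AB mA; apply: integrableS sint.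
have c1int : lam.-integrable B (EFin \o (fun=> 1 : R)).
  apply: measurable_bounded_integrable => //.
  exact: bounded_cst.
have sAm : Am `<=` B by move=> y [].
have sA0 : A0 `<=` B by move=> y [].
have sAp : Ap `<=` B by move=> y [].
have sintU : lam.-integrable (Am `|` A0 `|` Ap) (EFin \o s) by rewrite -hB.
have c1intU : lam.-integrable (Am `|` A0 `|` Ap) (EFin \o (fun=> 1 : R)) by rewrite -hB.
have hI := Rint_split3 mAm mA0 mAp d12 d3 sintU.
have hL := Rint_split3 mAm mA0 mAp d12 d3 c1intU.
rewrite -hB !Rintegral_cst // !mul1r -/L in hL.
rewrite -hB in hI.
have bE : b = Rintegral lam B s / L by [].
have IE : Rintegral lam B s = b * L by rewrite bE divfK// gt_eqF.
have h1 := Rint_le_cst (k := b - delta) mAm (fin _ sAm mAm) (sintA _ sAm mAm) (fun y h => ltW h.2).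
have h2 := Rint_le_cst (k := b + delta) mA0 (fin _ sA0 mA0) (sintA _ sA0 mA0) (fun y h => (andP h.2).2).
have h3 := Rint_le_cst (k := 1) mAp (fin _ sAp mAp) (sintA _ sAp mAp) (fun y h => (andP (s01 y)).2).
have g1 := Rint_ge_cst (k := 0) mAm (fin _ sAm mAm) (sintA _ sAm mAm) (fun y h => (andP (s01 y)).1).
have g2 := Rint_ge_cst (k := b - delta) mA0 (fin _ sA0 mA0) (sintA _ sA0 mA0) (fun y h => (andP h.2).1).
have g3 := Rint_ge_cst (k := b + delta) mAp (fin _ sAp mAp) (sintA _ sAp mAp) (fun y h => ltW h.2).
have e1 : mu_ball lam x l [set y | s y > b + delta] = fine (lam Ap) / L by [].
have e2 : mu_ball lam x l [set y | s y < b - delta] = fine (lam Am) / L by [].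
have e3 : mu_ball lam x l [set y | b - delta <= s y <= b + delta] = fine (lam A0) / L by [].
rewrite e1 e2 e3 !ler_pdivlMr//.
have n1 : 0 <= fine (lam Am) by apply: fine_ge0; apply: measure_ge0.
have n2 : 0 <= fine (lam A0) by apply: fine_ge0; apply: measure_ge0.
have n3 : 0 <= fine (lam Ap) by apply: fine_ge0; apply: measure_ge0.
apply: (@alg R (fine (lam Am)) (fine (lam A0)) (fine (lam Ap)) L b delta) => //.
  lra.
lra.
Qed.
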